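(* Let $(X,d)$ be a complete doubling metric space, $G\ge0$, and let $\mathrm T=(\mathcal T,\{x_I\},\{r_I\})$ satisfy (T1), (T2), (T'3), (T4), (T5) and (M1)–(M7) with respect to $G$, with exponent $s$. Then $s$ is the unique zero of the pressure function $t\mapsto p(-tf)$, where $f(\omega)=\log(1/\rho_\omega)$ is the function from (M6).
   Context: Words: $A_N=\{0,\dots,N-1\}$ ($N\ge2$), $\Sigma_N=A_N^{\mathbb N}$, shift $\sigma(\omega_1\omega_2\dots)=\omega_2\omega_3\dots$; for a finite word $I$, $\sigma^n(I)=I_{n+1}\cdots I_{|I|}$. For $\mathcal T\subseteq\Sigma_N$, $\mathcal T^*$ is the set of finite prefixes $\omega|_k$ ($k\ge0$) of elements of $\mathcal T$, $\mathcal T_k$ those of length $k$, $[I]=\{\omega\in\mathcal T:I\prec\omega\}$; $\prec$ prefix relation; $IJ$ concatenation; incomparable words differ at some position $\le$ the shorter length. $\mathcal T\cup\mathcal T^*\subseteq\Sigma_{N+1}$ via $I\mapsto I\,N\,N\cdots$, metric $2^{-(\text{common prefix length})}$; $\operatorname{var}_ng=\sup\{|g(\omega)-g(\tau)|:\omega|_n=\tau|_n\}$; $g$ Hölder if $\sup_n\operatorname{var}_n(g)/a^n<\infty$ for some $a\in(0,1)$. $S_ng=\sum_{k<n}g\circ\sigma^k$. $f,g$ cohomologous if $f-g=h\circ\sigma-h$, $h$ continuous; $f$ lattice if cohomologous to a function valued in a proper closed subgroup of $\mathbb R$, non-lattice otherwise. Pressure of continuous $g:\mathcal T\to\mathbb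 R$: $p(g)=\lim_{n\to\infty}\frac1n\log\sum_{I\in\mathcal T_n}\exp\big(\sup_{\omega\in[I]}S_ng(\omega)\big)$. Tree conditions (constants $\rho,C,D,E>0$): (T1) $d(x_I,x_J)\ge C(r_I+r_J)$ for incomparable $I,J$; (T2) $\operatorname{diam}\{x_{IJ}:IJ\in\mathcal T^*\}\le Dr_I$; (T'3) for all $I$, $n\ge0$ and every $\mathcal I\subseteq\bigcup_{k\ge n}\mathcal T_k$ such that each $\omega\in\mathcal T$ has exactly one prefix in $\mathcal I$ and some element of $\mathcal I$ extends $I$: $\frac1Er_I^s\le\sum_{IJ\in\mathcal I}r_{IJ}^s\le Er_I^s$; (T4) $r_I\to0$ as $|I|\to\infty$; (T5) $r_{Ij}\ge\rho r_I$. Generated set $K=\{x_\omega\}$, $x_\omega=\lim_nx_{\omega|_n}$; $K_I=\{x_\omega\in K:I\prec\omega\}$; $A_r=\{x:\operatorname{dist}(x,A)\le r\}$. (M1)–(M7) w.r.t. $G\ge0$ (all words in $\mathcal T^*$): (M1) $\mathcal T=\{\omega:A_{\omega_n\omega_{n+1}}=1\ \forall n\}$, $A\in\{0,1\}^{N\times N}$ irreducible aperiodic. (M2) $\{x_I\}\subseteq K$. (M3) $r_{Ii}\le Rr_I$ for some $0<R<1$. (M4) bi-Lipschitz $\varphi_i:X\to X$ and $W,\delta_0>0$ with $\varphi_I=\varphi_{I_1}\circ\dots\circ\varphi_{I_{|I|}}$, $\varphi_\varnothing=\mathrm{id}$, $\varphi_I(K_J)=K_{IJ}$ and $(K_I)_{r_IWG\delta}\subseteq\varphi_I(K_{G\delta})$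 for $\delta\le\delta_0$. (M5) for fixed $\xi\in(0,\delta_0)$, $\kappa^\mp_{i,J}$ are the optimal constants with $\kappa^-_{i,J}\frac{r_{iJ}}{r_J}d(x,y)\le d(\varphi_ix,\varphi_iy)\le\kappa^+_{i,J}\frac{r_{iJ}}{r_J}d(x,y)$ on $\varphi_J(K_{G\xi})$, $\kappa^\pm_{I,J}=\prod_{n=1}^{|I|}\kappa^\pm_{I_n,\sigma^n(I)J}$, and $\kappa^\pm_{I,J}\to1$ as $|J|\to\infty$ uniformly in $I$. (M6) with $f_1(iJ)=\log\frac{r_J}{r_{iJ}\kappa^+_{i,J}}$, $f_2(iJ)=\log\frac{r_J}{r_{iJ}\kappa^-_{i,J}}$, $f_1(\varnothing)=f_2(\varnothing)=0$: $r_{i\omega|_n}/r_{\omega|_n}\to\rho_{i\omega}\in(0,1)$, $\omega\mapsto\rho_\omega$ continuous on $\mathcal T$, and Hölder extensions $\tilde f_1,\tilde f_2$ of $f_1,f_2$ to $\mathcal T\cup\mathcal T^*$ exist with $\tilde f_1=\tilde f_2=\log(1/\rho_\omega)=:f(\omega)$ on $\mathcal T$. (M7) $f$ is non-lattice. *)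

(* Defs.v *)
From Stdlib Require Import Reals Lra Lia Arith List Classical ClassicalEpsilon.
Import ListNotations.
Open Scope R_scope.

Definition is_metric {X : Type} (d : X -> X -> R) : Prop :=
  (forall x y, 0 <= d x y) /\
  (forall x y, d x y = 0 <-> x = y) /\
  (forall x y, d x y = d y x) /\
  (forall x y z, d x z <= d x y + d y z).

Definition Xconv {X : Type} (d : X -> X -> R) (u : nat -> X) (y : X) : Prop :=
  forall eps, 0 < eps -> exists n0, forall n, (n0 <= n)%nat -> d (u n) y < eps.

Definition Xcauchy {X : Type} (d : X -> X -> R) (u : nat -> X) : Prop :=
  forall eps, 0 < eps -> exists n0, forall n m, (n0 <= n)%nat -> (n0 <= m)%nat ->
    d (u n) (u m) < eps.

Definition complete_space {X : Type} (d : X -> X -> R) : Prop :=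
  forall u, Xcauchy d u -> exists y, Xconv d u y.

Definition doubling {X : Type} (d : X -> X -> R) : Prop :=
  exists M : nat, forall x0 rr, 0 < rr ->
    exists cs : list X, (length cs <= M)%nat /\
      forall y, d x0 y <= 2 * rr -> exists c, In c cs /\ d c y <= rr.

(* A_r = {y : dist(y, A) <= r}, with dist(y,A) = inf_{a in A} d(y,a) *)
Definition nbhd {X : Type} (d : X -> X -> R) (A : X -> Prop) (rr : R) (y : X) : Prop :=
  forall eps, 0 < eps -> exists a, A a /\ d y a < rr + eps.

Definition image {X : Type} (phi : X -> X) (S : X -> Prop) (y : X) : Prop :=
  exists x, S x /\ y = phi x.

Definition bi_lipschitz {X : Type} (d : X -> X -> R) (phi : X -> X) : Prop :=
  exists L, 0 < L /\ forall x y, d x y / L <= d (phi x) (phi y) <= L * d x y.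

Definition is_glb (S : R -> Prop) (m : R) : Prop :=
  (forall q, S q -> m <= q) /\ (forall b, (forall q, S q -> b <= q) -> b <= m).

(* finite words: list nat ; infinite words: nat -> nat (omega_1 = w 0) *)

Definition seqw := nat -> nat.

Definition pref (w : seqw) (n : nat) : list nat := map w (seq 0 n).

Definition shift (w : seqw) : seqw := fun n => w (S n).
Definition shiftk (k : nat) (w : seqw) : seqw := fun n => w (n + k)%nat.

Definition incomparable (I J : list nat) : Prop :=
  exists k, (k < length I)%nat /\ (k < length J)%nat /\ nth k I 0%nat <> nth k J 0%nat.

Definition Tstar (T : seqw -> Prop) (I : list nat) : Prop :=
  exists w, T w /\ pref w (length I) = I.

Definition cyl (T : seqw -> Prop) (I : list nat) (w : seqw) : Prop :=
  T w /\ pref w (length I) = I.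

Fixpoint words (N n : nat) : list (list nat) :=
  match n with
  | O => [ [] ]
  | S m => flat_map (fun i => map (cons i) (words N m)) (seq 0 N)
  end.

(* embedding T^* -> Sigma_{N+1}, I |-> I N N N ... *)
Definition emb (N : nat) (I : list nat) : seqw := fun n => nth n I N.

Definition agree (n : nat) (w t : seqw) : Prop := forall k, (k < n)%nat -> w k = t k.

(* continuity on U w.r.t. the metric 2^{-(common prefix length)} *)
Definition cont_on (U : seqw -> Prop) (g : seqw -> R) : Prop :=
  forall w, U w -> forall eps, 0 < eps -> exists m, forall t, U t -> agree m w t ->
    Rabs (g t - g w) < eps.

(* Hoelder on U: sup_n var_n(g)/a^n < oo for some a in (0,1), where
   var_n g = sup{|g w - g t| : w|n = t|n} (w, t in U) *)
Definition holder_on (U : seqw -> Prop) (g : seqw -> R) : Prop :=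
  exists a B, 0 < a < 1 /\ forall n w t, U w -> U t -> agree n w t ->
    Rabs (g w - g t) <= B * a ^ n.

Fixpoint Apow (A : nat -> nat -> nat) (N n i j : nat) : nat :=
  match n with
  | O => if Nat.eqb i j then 1%nat else 0%nat
  | S m => fold_right plus 0%nat (map (fun k => (A i k * Apow A N m k j)%nat) (seq 0 N))
  end.

Definition zero_one_matrix (A : nat -> nat -> nat) (N : nat) : Prop :=
  forall i j, (i < N)%nat -> (j < N)%nat -> A i j = 0%nat \/ A i j = 1%nat.

Definition irreducible (A : nat -> nat -> nat) (N : nat) : Prop :=
  forall i j, (i < N)%nat -> (j < N)%nat -> exists n, (0 < Apow A N n i j)%nat.

(* period of every state is 1: gcd{n : (A^n)_{ii} > 0} = 1 *)
Definition aperiodic (A : nat -> nat -> nat) (N : nat) : Prop :=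
  forall i, (i < N)%nat -> forall p, (1 < p)%nat ->
    exists n, (0 < Apow A N n i i)%nat /\ ~ Nat.divide p n.

(* K_I = {x_omega : omega in T, I prefix of omega}, x_omega = lim x_{omega|n} *)
Definition KI {X : Type} (d : X -> X -> R) (T : seqw -> Prop) (x : list nat -> X)
  (I : list nat) (y : X) : Prop :=
  exists w, T w /\ pref w (length I) = I /\ Xconv d (fun n => x (pref w n)) y.

Definition Kset {X : Type} d T x : X -> Prop := @KI X d T x [].

Fixpoint phiw {X : Type} (phi : nat -> X -> X) (I : list nat) : X -> X :=
  match I with
  | [] => fun y => y
  | i :: I' => fun y => phi i (phiw phi I' y)
  end.

Fixpoint kapw (kap : nat -> list nat -> R) (I J : list nat) : R :=
  match I with
  | [] => 1
  | i :: I' => kap i (I' ++ J) * kapw kap I' J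
  end.

(* f_1 / f_2 of (M6): f(iJ) = log (r_J / (r_{iJ} kappa_{i,J})), f(empty) = 0 *)
Definition fM6 (r : list nat -> R) (kap : nat -> list nat -> R) (I : list nat) : R :=
  match I with
  | [] => 0
  | i :: J => ln (r J / (r (i :: J) * kap i J))
  end.

(* unordered sums of nonnegative terms over a predicate P (= sup of finite sums) *)
Definition lsum (l : list R) : R := fold_right Rplus 0 l.

Definition usum_le (P : list nat -> Prop) (w : list nat -> R) (B : R) : Prop :=
  forall l, NoDup l -> (forall K, In K l -> P K) -> lsum (map w l) <= B.

Definition usum_ge (P : list nat -> Prop) (w : list nat -> R) (B : R) : Prop :=
  forall eps, 0 < eps -> exists l, NoDup l /\ (forall K, In K l -> P K) /\
    B - eps < lsum (map w l).

(* supremum of a set of reals (0 if it has no least upper bound) *)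
Definition Rsup (S : R -> Prop) : R :=
  match excluded_middle_informative (exists l, is_lub S l) with
  | left H => proj1_sig (constructive_indefinite_description _ H)
  | right _ => 0
  end.

Definition birkhoff (g : seqw -> R) (n : nat) (w : seqw) : R :=
  lsum (map (fun k => g (shiftk k w)) (seq 0 n)).

Definition pressure_seq (N : nat) (T : seqw -> Prop) (g : seqw -> R) (n : nat) : R :=
  / INR n * ln (lsum (map (fun I =>
      match excluded_middle_informative (Tstar T I) with
      | left _ => exp (Rsup (fun v => exists w, cyl T I w /\ v = birkhoff g n w))
      | right _ => 0
      end) (words N n))).

Definition is_pressure (N : nat) (T : seqw -> Prop) (g : seqw -> R) (P : R) : Prop :=
  Un_cv (pressure_seq N T g) P.

Definition proper_closed_subgroup (H : R -> Prop) : Prop :=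
  H 0 /\ (forall a b, H a -> H b -> H (a - b)) /\
  (forall y, (forall eps, 0 < eps -> exists z, H z /\ Rabs (y - z) < eps) -> H y) /\
  (exists y, ~ H y).

Definition cohomologous (T : seqw -> Prop) (f g : seqw -> R) : Prop :=
  exists h, cont_on T h /\ forall w, T w -> f w - g w = h (shift w) - h w.

Definition lattice (T : seqw -> Prop) (f : seqw -> R) : Prop :=
  exists g H, proper_closed_subgroup H /\ (forall w, T w -> H (g w)) /\ cohomologous T f g.

Definition non_lattice (T : seqw -> Prop) (f : seqw -> R) : Prop := ~ lattice T f.

Section Cond.
Context {X : Type} (d : X -> X -> R) (N : nat) (T : seqw -> Prop)
        (x : list nat -> X) (r : list nat -> R).

Definition T1 (C : R) : Prop :=
  forall I J, Tstar T I -> Tstar T J -> incomparable I J -> d (x I) (x J) >= C * (r I + r J).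

Definition T2 (D : R) : Prop :=
  forall I J J', Tstar T I -> Tstar T (I ++ J) -> Tstar T (I ++ J') ->
    d (x (I ++ J)) (x (I ++ J')) <= D * r I.

Definition T3' (s E : R) : Prop :=
  forall I, Tstar T I -> forall (n : nat) (Ic : list nat -> Prop),
    (forall J, Ic J -> Tstar T J /\ (n <= length J)%nat) ->
    (forall w, T w -> exists! k, Ic (pref w k)) ->
    (exists J, Ic (I ++ J)) ->
    usum_ge (fun K => exists J, K = I ++ J /\ Ic K) (fun K => Rpower (r K) s) (/ E * Rpower (r I) s) /\
    usum_le (fun K => exists J, K = I ++ J /\ Ic K) (fun K => Rpower (r K) s) (E * Rpower (r I) s).

Definition T4 : Prop :=
  forall eps, 0 < eps -> exists n0, forall I, Tstar T I -> (n0 <= length I)%nat -> Rabs (r I) < eps.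

Definition T5 (rho : R) : Prop :=
  forall I j, Tstar T (I ++ [j]) -> r (I ++ [j]) >= rho * r I.

Definition M1 (A : nat -> nat -> nat) : Prop :=
  zero_one_matrix A N /\ irreducible A N /\ aperiodic A N /\
  forall w, T w <-> ((forall n, (w n < N)%nat) /\ (forall n, A (w n) (w (S n)) = 1%nat)).

Definition M2 : Prop := forall I, Tstar T I -> Kset d T x (x I).

Definition M3 : Prop :=
  exists Rc, 0 < Rc < 1 /\ forall I i, Tstar T (I ++ [i]) -> r (I ++ [i]) <= Rc * r I.

Definition M4 (G : R) (phi : nat -> X -> X) (W delta0 : R) : Prop :=
  0 < W /\ 0 < delta0 /\
  (forall i, (i < N)%nat -> bi_lipschitz d (phi i)) /\
  (forall I J, Tstar T (I ++ J) ->
     forall y, image (phiw phi I) (KI d T x J) y <-> KI d T x (I ++ J) y) /\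
  (forall I, Tstar T I -> forall delta, 0 < delta <= delta0 ->
     forall y, nbhd d (KI d T x I) (r I * W * G * delta) y ->
       image (phiw phi I) (nbhd d (Kset d T x) (G * delta)) y).

Definition ratio_set (G : R) (phi : nat -> X -> X) (xi : R) (i : nat) (J : list nat) (q : R) : Prop :=
  exists y1 y2,
    image (phiw phi J) (nbhd d (Kset d T x) (G * xi)) y1 /\
    image (phiw phi J) (nbhd d (Kset d T x) (G * xi)) y2 /\ y1 <> y2 /\
    q = d (phi i y1) (phi i y2) / (r (i :: J) / r J * d y1 y2).

Definition M5 (G : R) (phi : nat -> X -> X) (delta0 xi : R)
  (kp km : nat -> list nat -> R) : Prop :=
  0 < xi < delta0 /\
  (forall i J, Tstar T (i :: J) ->
     is_lub (ratio_set G phi xi i J) (kp i J) /\ is_glb (ratio_set G phi xi i J) (km i J)) /\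
  (forall eps, 0 < eps -> exists m, forall I J, Tstar T (I ++ J) -> (m <= length J)%nat ->
     Rabs (kapw kp I J - 1) < eps /\ Rabs (kapw km I J - 1) < eps).

Definition TstarU (w : seqw) : Prop :=
  T w \/ exists I, Tstar T I /\ forall n, w n = emb N I n.

Definition M6 (kp km : nat -> list nat -> R) (rhow : seqw -> R) (f1t f2t : seqw -> R) : Prop :=
  (forall w, T w ->
     Un_cv (fun n => r (pref w (S n)) / r (pref (shift w) n)) (rhow w) /\ 0 < rhow w < 1) /\
  cont_on T rhow /\
  holder_on TstarU f1t /\ holder_on TstarU f2t /\
  (forall I, Tstar T I -> f1t (emb N I) = fM6 r kp I /\ f2t (emb N I) = fM6 r km I) /\
  (forall w, T w -> f1t w = ln (/ rhow w) /\ f2t w = ln (/ rhow w)).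

End Cond.

(* Main.v *)
Require Import Defs.
From Stdlib Require Import Reals List Lra Lia Arith FunctionalExtensionality Classical ClassicalEpsilon.
Import ListNotations.
Open Scope R_scope.

Lemma pref_S w n : pref w (S n) = pref w n ++ [w n].
Proof. unfold pref. rewrite seq_S, map_app. reflexivity. Qed.

Lemma pref_length w n : length (pref w n) = n.
Proof. unfold pref. rewrite length_map, length_seq. reflexivity. Qed.

Lemma pref_cons w n : pref w (S n) = w 0%nat :: pref (shift w) n.
Proof. unfold pref, shift. simpl. f_equal. rewrite <- seq_shift, map_map. reflexivity. Qed.

Lemma pref_app w p m : pref w (p + m) = pref w p ++ pref (shiftk p w) m.
Proof.
  induction m as [|m IH].
  - rewrite Nat.add_0_r. simpl. rewrite app_nil_r. reflexivity.
  - rewrite Nat.add_succ_r, !pref_S, IH, <- app_assoc. unfold shiftk.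
    f_equal. f_equal. f_equal. f_equal. lia.
Qed.

Lemma nth_pref w n j dd : (j < n)%nat -> nth j (pref w n) dd = w j.
Proof.
  intro H. unfold pref. rewrite (nth_indep _ dd (w 0%nat)) by (rewrite length_map, length_seq; lia).
  rewrite map_nth, seq_nth by lia. reflexivity.
Qed.

Lemma shiftk_S p w : shiftk (S p) w = shiftk p (shift w).
Proof. apply functional_extensionality. intro j. unfold shiftk, shift. f_equal. lia. Qed.

Lemma shiftk_add k n w : shiftk k (shiftk n w) = shiftk (k + n) w.
Proof. apply functional_extensionality. intro j. unfold shiftk. f_equal. lia. Qed.

Lemma shiftk_0 w : shiftk 0 w = w.
Proof. apply functional_extensionality. intro j. unfold shiftk. f_equal. lia. Qed.

Lemma T_shiftk N T A : M1 N T A -> forall n w, T w -> T (shiftk n w).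
Proof.
  intros (_ & _ & _ & HT) n w Hw. apply HT in Hw. destruct Hw as [H1 H2].
  apply HT. unfold shiftk. split; intro j. apply H1. replace (S j + n)%nat with (S (j+n)) by lia. apply H2.
Qed.

Lemma T_shift N T A : M1 N T A -> forall w, T w -> T (shift w).
Proof.
  intros HM w Hw. replace (shift w) with (shiftk 1 w). apply (T_shiftk _ _ _ HM); auto.
  apply functional_extensionality. intro j. unfold shiftk, shift. f_equal. lia.
Qed.

Lemma Tstar_pref T w n : T w -> Tstar T (pref w n).
Proof. intro H. exists w. split; auto. rewrite pref_length. reflexivity. Qed.

Lemma lsum_app l1 l2 : lsum (l1 ++ l2) = lsum l1 + lsum l2.
Proof. induction l1; simpl; [lra|]. rewrite IHl1. lra. Qed.

Lemma lsum_scal_l {A} (g : A -> R) c l : lsum (map (fun x => c * g x) l) = c * lsum (map g l).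
Proof. induction l; simpl; [lra|]. rewrite IHl. lra. Qed.

Lemma lsum_scal_r {A} (g : A -> R) c l : lsum (map (fun x => g x * c) l) = lsum (map g l) * c.
Proof. induction l; simpl; [lra|]. rewrite IHl. lra. Qed.

Lemma lsum_le {A} (g h : A -> R) l : (forall x, In x l -> g x <= h x) -> lsum (map g l) <= lsum (map h l).
Proof. induction l; simpl; intros H; [lra|]. assert (g a <= h a) by auto. assert (lsum (map g l) <= lsum (map h l)) by auto. lra. Qed.

Lemma lsum_nonneg {A} (g : A -> R) l : (forall x, In x l -> 0 <= g x) -> 0 <= lsum (map g l).
Proof. induction l; simpl; intros H; [lra|]. assert (0 <= g a) by auto. assert (0 <= lsum (map g l)) by auto. lra. Qed.

Lemma In_le_lsum {A} (g : A -> R) l a : (forall x, In x l -> 0 <= g x) -> In a l -> g a <= lsum (map g l).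
Proof.
  induction l; simpl; intros H Ha; [contradiction|]. destruct Ha as [<-|Ha].
  - assert (0 <= lsum (map g l)) by (apply lsum_nonneg; auto). lra.
  - assert (0 <= g a0) by auto. assert (g a <= lsum (map g l)) by auto. lra.
Qed.

Lemma lsum_remove (g : list nat -> R) m a : (forall x, In x m -> 0 <= g x) -> In a m ->
  g a + lsum (map g (remove (list_eq_dec Nat.eq_dec) a m)) <= lsum (map g m).
Proof.
  induction m as [|b m IH]; simpl; intros H Ha; [contradiction|].
  destruct (list_eq_dec Nat.eq_dec a b) as [->|Hne].
  - assert (lsum (map g (remove (list_eq_dec Nat.eq_dec) b m)) <= lsum (map g m)).
    { clear IH Ha. induction m as [|c m IH2]; simpl; [lra|].
      destruct (list_eq_dec Nat.eq_dec b c); simpl.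
      + assert (0 <= g c) by (apply H; right; left; auto).
        assert (lsum (map g (remove (list_eq_dec Nat.eq_dec) b m)) <= lsum (map g m)) by (apply IH2; intros x [Hx|Hx]; apply H; [left|right;right]; auto). lra.
      + assert (lsum (map g (remove (list_eq_dec Nat.eq_dec) b m)) <= lsum (map g m)) by (apply IH2; intros x [Hx|Hx]; apply H; [left|right;right]; auto). lra. }
    lra.
  - simpl. destruct Ha as [Ha|Ha]; [congruence|].
    assert (g a + lsum (map g (remove (list_eq_dec Nat.eq_dec) a m)) <= lsum (map g m)) by auto. lra.
Qed.

Lemma lsum_sub (g : list nat -> R) l m : NoDup l -> incl l m -> (forall x, In x m -> 0 <= g x) ->
  lsum (map g l) <= lsum (map g m).
Proof.
  revert m. induction l as [|a l IH]; simpl; intros m Hnd Hinc Hpos.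
  - apply lsum_nonneg; auto.
  - inversion Hnd; subst.
    assert (Ha : In a m) by (apply Hinc; left; auto).
    assert (lsum (map g l) <= lsum (map g (remove (list_eq_dec Nat.eq_dec) a m))).
    { apply IH; auto.
      - intros y Hy. apply in_in_remove. intro; subst; contradiction. apply Hinc; right; auto.
      - intros y Hy. apply Hpos. eapply in_remove; eauto. }
    pose proof (lsum_remove g m a Hpos Ha). lra.
Qed.

Lemma lsum_flat (F : list nat -> R) L l :
  lsum (map F (flat_map (fun i => map (cons i) L) l)) = lsum (map (fun i => lsum (map (fun J => F (i :: J)) L)) l).
Proof.
  induction l; simpl; [reflexivity|]. rewrite map_app, lsum_app, IHl, map_map. reflexivity.
Qed.

Lemma words_split N (F : list nat -> R) n m :
  lsum (map F (words N (n + m))) = lsum (map (fun I1 => lsum (map (fun I2 => F (I1 ++ I2)) (words N m))) (words N n)).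
Proof.
  revert F. induction n as [|n IH]; intro F.
  - simpl. rewrite Rplus_0_r. reflexivity.
  - simpl. rewrite !lsum_flat. f_equal. apply map_ext. intro i. rewrite (IH (fun J => F (i :: J))). reflexivity.
Qed.

Lemma In_words_length N n I : In I (words N n) -> length I = n.
Proof.
  revert I. induction n; simpl; intros I H.
  - destruct H as [<-|[]]; reflexivity.
  - apply in_flat_map in H. destruct H as (i & _ & H). apply in_map_iff in H. destruct H as (J & <- & HJ).
    simpl. f_equal. auto.
Qed.

Lemma In_words N n I : length I = n -> (forall j, In j I -> (j < N)%nat) -> In I (words N n).
Proof.
  revert I. induction n; simpl; intros I Hl Hb.
  - destruct I; [left; auto| discriminate].
  - destruct I as [|i I]; [discriminate|]. apply in_flat_map. exists i. split.
    + apply in_seq. split; [lia|]. simpl. apply Hb. left; auto.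
    + apply in_map. apply IHn. simpl in Hl; lia. intros; apply Hb; right; auto.
Qed.

Lemma NoDup_words N n : NoDup (words N n).
Proof.
  induction n; simpl.
  - constructor; [intros []|constructor].
  - assert (G: forall l, NoDup l -> NoDup (flat_map (fun i => map (cons i) (words N n)) l)).
    { induction l as [|a l IHl]; simpl; intros Hl; [constructor|]. inversion Hl; subst.
      apply NoDup_app; auto.
      - apply NoDup_map_inv with (f := @tl nat). rewrite map_map. simpl. rewrite map_id. auto.
      - intros y Hy1 Hy2. apply in_map_iff in Hy1. destruct Hy1 as (J & <- & _).
        apply in_flat_map in Hy2. destruct Hy2 as (b & Hb & Hy). apply in_map_iff in Hy.
        destruct Hy as (J' & Heq & _). inversion Heq; subst. contradiction. }
    apply G. apply seq_NoDup.
Qed.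

Lemma fold_plus_pos (g : nat -> nat) l : (0 < fold_right plus 0%nat (map g l))%nat -> exists k, In k l /\ (0 < g k)%nat.
Proof.
  induction l; simpl; intro H; [lia|]. destruct (Nat.eq_dec (g a) 0).
  - destruct IHl as (k & Hk & Hg); [lia|]. exists k; auto.
  - exists a; split; auto; lia.
Qed.

Lemma T_nonempty N T A : (2 <= N)%nat -> M1 N T A -> exists w, T w.
Proof.
  intros HN HM. destruct HM as (H01 & Hirr & Hap & HT).
  assert (Hs : forall i, exists k, (i < N)%nat -> (k < N)%nat /\ A i k = 1%nat).
  { intro i. destruct (lt_dec i N) as [Hi|Hi]; [|exists 0%nat; intro; lia].
    set (j := if Nat.eqb i 0 then 1%nat else 0%nat).
    assert (Hj : (j < N)%nat /\ i <> j) by (unfold j; destruct (Nat.eqb_spec i 0); lia).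
    destruct (Hirr i j Hi (proj1 Hj)) as [n Hn]. destruct n as [|m].
    - simpl in Hn. destruct (Nat.eqb_spec i j); lia.
    - simpl in Hn. apply fold_plus_pos in Hn. destruct Hn as (k & Hk & Hg). apply in_seq in Hk.
      exists k. intros _. split; [lia|]. destruct (H01 i k Hi ltac:(lia)) as [H0|H1]; auto.
      rewrite H0 in Hg. simpl in Hg. lia. }
  set (f := fun i => proj1_sig (constructive_indefinite_description _ (Hs i))).
  assert (Hf : forall i, (i < N)%nat -> (f i < N)%nat /\ A i (f i) = 1%nat).
  { intro i. unfold f. destruct (constructive_indefinite_description _ (Hs i)); simpl; auto. }
  exists (fun n => Nat.iter n f 0%nat). apply HT.
  assert (Hb : forall n, (Nat.iter n f 0%nat < N)%nat).
  { induction n; simpl; [lia|]. apply Hf; auto. }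
  split; auto. intro n. simpl. apply Hf; auto.
Qed.

Lemma ln_le x y : 0 < x -> x <= y -> ln x <= ln y.
Proof. intros Hx [H|H]. left; apply ln_increasing; auto. subst; lra. Qed.

Lemma ln_r_bounds T r rho Rc (Hrpos : forall I, Tstar T I -> 0 < r I) (Hrho : 0 < rho) (HRc : 0 < Rc)
  (HT5 : T5 T r rho) (HM3 : forall I i, Tstar T (I ++ [i]) -> r (I ++ [i]) <= Rc * r I) :
  forall w n, T w -> INR n * ln rho <= ln (r (pref w n)) - ln (r []) <= INR n * ln Rc.
Proof.
  intros w n Hw. induction n.
  - replace (pref w 0) with (@nil nat) by reflexivity. simpl INR. rewrite !Rmult_0_l. lra.
  - rewrite pref_S. assert (Hs : Tstar T (pref w n ++ [w n])) by (rewrite <- pref_S; apply Tstar_pref; auto).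
    assert (H0 : 0 < r (pref w n)) by (apply Hrpos, Tstar_pref; auto).
    assert (H1 : 0 < r (pref w n ++ [w n])) by auto.
    pose proof (HT5 _ _ Hs). pose proof (HM3 _ _ Hs).
    assert (ln (rho * r (pref w n)) <= ln (r (pref w n ++ [w n]))) by (apply ln_le; [nra|lra]).
    assert (ln (r (pref w n ++ [w n])) <= ln (Rc * r (pref w n))) by (apply ln_le; [nra|lra]).
    rewrite ln_mult in * by lra. rewrite S_INR. lra.
Qed.

Lemma T_first_lt N T A w : M1 N T A -> T w -> forall k, (w k < N)%nat.
Proof. intros (_ & _ & _ & HT) Hw. apply HT in Hw. apply Hw. Qed.

Lemma Tstar_cons_inv N T A i J : M1 N T A -> Tstar T (i :: J) -> (i < N)%nat /\ Tstar T J.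
Proof.
  intros HM (w & Hw & Hp). simpl length in Hp. rewrite pref_cons in Hp.
  injection Hp as H0 H1. split.
  - subst i. eapply T_first_lt; eauto.
  - exists (shift w). split; auto. eapply T_shift; eauto.
Qed.

Lemma kp_pos {X} (d : X -> X -> R) N T x r G phi W delta0 xi kp km A
  (Hmetric : is_metric d) (Hrpos : forall I, Tstar T I -> 0 < r I) (HM1 : M1 N T A)
  (HM4 : M4 d N T x r G phi W delta0) (HM5 : M5 d T x r G phi delta0 xi kp km) :
  forall i J, Tstar T (i :: J) -> 0 < kp i J.
Proof.
  intros i J HiJ. destruct (Tstar_cons_inv _ _ _ _ _ HM1 HiJ) as [HiN HJ].
  destruct HM5 as (_ & Hlub & _). destruct (Hlub i J HiJ) as [[Hub Hleast] [Hlb Hgreat]].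
  destruct HM4 as (_ & _ & Hbl & _). destruct (Hbl i HiN) as (L & HL & HLip).
  destruct Hmetric as (Hd0 & Hdeq & _).
  assert (Hne : exists q, ratio_set d T x r G phi xi i J q).
  { apply NNPP. intro Hn. assert (kp i J <= kp i J - 1); [|lra].
    apply Hleast. intros q Hq. exfalso. apply Hn. exists q; auto. }
  destruct Hne as (q & Hq).
  assert (Hqpos : forall q, ratio_set d T x r G phi xi i J q -> 0 < q).
  { intros q0 (y1 & y2 & _ & _ & Hne & ->).
    assert (Hdy : 0 < d y1 y2).
    { destruct (Rle_lt_or_eq_dec 0 _ (Hd0 y1 y2)) as [h|h]; auto. symmetry in h. apply Hdeq in h. contradiction. }
    destruct (HLip y1 y2) as [Hl _].
    assert (0 < d y1 y2 / L) by (apply Rdiv_lt_0_compat; auto).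
    assert (0 < r (i :: J) / r J) by (apply Rdiv_lt_0_compat; auto).
    apply Rdiv_lt_0_compat; [lra|]. apply Rmult_lt_0_compat; auto. }
  pose proof (Hub q Hq). pose proof (Hqpos q Hq). lra.
Qed.

Lemma birkhoff_S g p w : birkhoff g (S p) w = g w + birkhoff g p (shift w).
Proof.
  unfold birkhoff. simpl seq. simpl map. rewrite shiftk_0. simpl lsum. f_equal.
  rewrite <- seq_shift, map_map. f_equal. apply map_ext. intro k. rewrite shiftk_S. reflexivity.
Qed.

Lemma birkhoff_0 g w : birkhoff g 0 w = 0.
Proof. reflexivity. Qed.

Lemma birkhoff_add g n m w : birkhoff g (n + m) w = birkhoff g n w + birkhoff g m (shiftk n w).
Proof.
  induction m.
  - rewrite Nat.add_0_r, birkhoff_0. lra.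
  - unfold birkhoff in *. rewrite Nat.add_succ_r, !seq_S, !map_app, !lsum_app, IHm. simpl.
    rewrite shiftk_add. rewrite (Nat.add_comm m n). lra.
Qed.

Lemma birkhoff_scal (f : seqw -> R) c n w : birkhoff (fun v => c * f v) n w = c * birkhoff f n w.
Proof. unfold birkhoff. apply (lsum_scal_l (fun k => f (shiftk k w))). Qed.

Lemma kapw_pos N T A kp (HM1 : M1 N T A) (Hkp : forall i J, Tstar T (i :: J) -> 0 < kp i J) :
  forall I J, Tstar T (I ++ J) -> 0 < kapw kp I J.
Proof.
  induction I as [|i I IH]; simpl; intros J H; [lra|].
  apply Rmult_lt_0_compat; auto. apply IH. apply (Tstar_cons_inv _ _ _ _ _ HM1 H).
Qed.

Lemma ln_div a b : 0 < a -> 0 < b -> ln (a / b) = ln a - ln b.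
Proof. intros. unfold Rdiv. rewrite ln_mult, ln_Rinv; try lra. apply Rinv_0_lt_compat; auto. Qed.

Lemma distortion N T A r rho Rc kp rhow B a m
  (HM1 : M1 N T A) (Hrpos : forall I, Tstar T I -> 0 < r I) (Hrho : 0 < rho) (HRc : 0 < Rc)
  (HT5 : T5 T r rho) (HM3 : forall I i, Tstar T (I ++ [i]) -> r (I ++ [i]) <= Rc * r I)
  (Hkp : forall i J, Tstar T (i :: J) -> 0 < kp i J)
  (Hhold : forall w k, T w -> Rabs (ln (/ rhow w) - fM6 r kp (pref w k)) <= B * a ^ k)
  (Ha : 0 < a < 1) (HB : 0 <= B)
  (Hm : forall I J, Tstar T (I ++ J) -> (m <= length J)%nat -> Rabs (kapw kp I J - 1) < / 2) :
  exists K, 0 <= K /\ forall n w, T w ->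
    Rabs (ln (r (pref w n)) - ln (r []) + birkhoff (fun v => ln (/ rhow v)) n w) <= K.
Proof.
  set (f := fun v => ln (/ rhow v)).
  assert (Hphi : forall p w, T w ->
    Rabs (ln (r (pref w (p + m))) - ln (r (pref (shiftk p w) m)) + birkhoff f p w
          + ln (kapw kp (pref w p) (pref (shiftk p w) m))) <= B * (1 - a ^ p) / (1 - a)).
  { induction p as [|p IH]; intros w Hw.
    - replace (pref w 0) with (@nil nat) by reflexivity. rewrite shiftk_0, birkhoff_0. simpl kapw.
      rewrite ln_1. simpl. replace (B * (1 - 1) / (1 - a)) with 0 by (field; lra).
      replace (ln (r (pref w m)) - ln (r (pref w m)) + 0 + 0) with 0 by ring. rewrite Rabs_R0. lra.
    - assert (Hsw : T (shift w)) by (eapply T_shift; eauto).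
      specialize (IH (shift w) Hsw).
      rewrite shiftk_S. simpl (S p + m)%nat. rewrite pref_cons, birkhoff_S.
      rewrite (pref_cons w p). simpl kapw. rewrite <- pref_app.
      set (L := pref (shift w) (p + m)) in *. set (J := pref (shiftk p (shift w)) m) in *.
      assert (HL : Tstar T (w 0%nat :: L)) by (unfold L; rewrite <- pref_cons; apply Tstar_pref; auto).
      assert (HLs : Tstar T L) by (apply (Tstar_cons_inv _ _ _ _ _ HM1 HL)).
      assert (Hk : 0 < kp (w 0%nat) L) by auto.
      assert (Hkw : 0 < kapw kp (pref (shift w) p) J).
      { apply (kapw_pos _ _ _ _ HM1 Hkp). unfold J. rewrite <- pref_app. apply Tstar_pref; auto. }
      assert (Hr1 : 0 < r (w 0%nat :: L)) by auto. assert (Hr2 : 0 < r L) by auto.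
      assert (Hf : fM6 r kp (w 0%nat :: L) = ln (r L) - ln (r (w 0%nat :: L)) - ln (kp (w 0%nat) L)).
      { simpl. rewrite ln_div, ln_mult; try lra. apply Rmult_lt_0_compat; auto. }
      rewrite ln_mult by auto.
      pose proof (Hhold w (S (p + m)) Hw) as Hh.
      rewrite pref_cons in Hh. fold L in Hh. fold f in Hh.
      assert (Hap : a ^ (S (p + m)) <= a ^ p).
      { replace (S (p + m)) with (p + S m)%nat by lia. rewrite pow_add.
        pose proof (pow_lt_1_compat a (S m) ltac:(lra) ltac:(lia)). pose proof (pow_le a p ltac:(lra)). nra. }
      assert (Hsum : B * (1 - a ^ p) / (1 - a) + B * a ^ p = B * (1 - a ^ S p) / (1 - a)) by (simpl; field; lra).
      assert (HBa : B * a ^ (S (p + m)) <= B * a ^ p) by (apply Rmult_le_compat_l; auto).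
      eapply Rle_trans; [|right; exact Hsum].
      eapply Rle_trans; [|apply Rplus_le_compat; [exact IH| eapply Rle_trans; [exact Hh|exact HBa]]].
      eapply Rle_trans; [|apply Rabs_triang]. right. f_equal. rewrite Hf. unfold f. ring. }
  set (M0 := lsum (map (fun i => Rabs (fM6 r kp [i])) (seq 0 N))).
  set (Lr := Rabs (ln rho) + Rabs (ln Rc)).
  assert (HM0 : 0 <= M0) by (apply lsum_nonneg; intros; apply Rabs_pos).
  assert (HLr : 0 <= Lr) by (unfold Lr; pose proof (Rabs_pos (ln rho)); pose proof (Rabs_pos (ln Rc)); lra).
  assert (Fb : forall v, T v -> Rabs (f v) <= B + M0).
  { intros v Hv. pose proof (Hhold v 1%nat Hv) as Hh. change (ln (/ rhow v)) with (f v) in Hh.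
    replace (pref v 1) with [v 0%nat] in Hh by reflexivity.
    assert (Rabs (fM6 r kp [v 0%nat]) <= M0).
    { apply (In_le_lsum (fun i => Rabs (fM6 r kp [i]))). intros; apply Rabs_pos.
      apply in_seq. split; [lia|]. simpl. eapply T_first_lt; eauto. }
    assert (B * a ^ 1 <= B) by (simpl; nra).
    pose proof (Rabs_triang_inv (f v) (fM6 r kp [v 0%nat])). lra. }
  assert (Bb : forall n w, T w -> Rabs (birkhoff f n w) <= INR n * (B + M0)).
  { induction n; intros w Hw.
    - rewrite birkhoff_0, Rabs_R0. simpl. lra.
    - rewrite birkhoff_S, S_INR. assert (T (shift w)) by (eapply T_shift; eauto).
      pose proof (IHn (shift w) H). pose proof (Fb w Hw).
      pose proof (Rabs_triang (f w) (birkhoff f n (shift w))). lra. }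
  assert (Rb : forall n w, T w -> Rabs (ln (r (pref w n)) - ln (r [])) <= INR n * Lr).
  { intros n w Hw. destruct (ln_r_bounds T r rho Rc Hrpos Hrho HRc HT5 HM3 w n Hw) as [h1 h2].
    pose proof (pos_INR n). unfold Lr.
    pose proof (Rle_abs (ln Rc)). pose proof (Rle_abs (- ln rho)). rewrite Rabs_Ropp in *.
    assert (INR n * ln Rc <= INR n * Rabs (ln Rc)) by (apply Rmult_le_compat_l; lra).
    assert (INR n * (- ln rho) <= INR n * Rabs (ln rho)) by (apply Rmult_le_compat_l; lra).
    assert (0 <= INR n * Rabs (ln rho)) by (apply Rmult_le_pos; auto; apply Rabs_pos).
    assert (0 <= INR n * Rabs (ln Rc)) by (apply Rmult_le_pos; auto; apply Rabs_pos).
    apply Rabs_le. split; nra. }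
  assert (Hln2 : 0 < ln 2) by (pose proof ln_lt_2; lra).
  assert (Kb : forall p w, T w -> Rabs (ln (kapw kp (pref w p) (pref (shiftk p w) m))) <= ln 2).
  { intros p w Hw. assert (Hk := Hm (pref w p) (pref (shiftk p w) m)).
    rewrite <- pref_app, pref_length in Hk. specialize (Hk (Tstar_pref _ _ _ Hw) (le_n _)).
    apply Rabs_def2 in Hk. destruct Hk as [k1 k2].
    assert (ln (kapw kp (pref w p) (pref (shiftk p w) m)) < ln 2) by (apply ln_increasing; lra).
    assert (ln (/2) < ln (kapw kp (pref w p) (pref (shiftk p w) m))) by (apply ln_increasing; lra).
    rewrite ln_Rinv in * by lra. apply Rabs_le. lra. }
  exists (INR m * (Lr + (B + M0)) + ln 2 + B / (1 - a)).
  assert (HBa : 0 <= B / (1 - a)) by (unfold Rdiv; apply Rmult_le_pos; [lra|left; apply Rinv_0_lt_compat; lra]).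
  split. { pose proof (pos_INR m). nra. }
  intros n w Hw. destruct (le_lt_dec m n) as [Hmn|Hmn].
  - replace n with ((n - m) + m)%nat by lia. set (p := (n - m)%nat).
    rewrite birkhoff_add.
    assert (Hsw : T (shiftk p w)) by (eapply T_shiftk; eauto).
    pose proof (Hphi p w Hw) as H1. pose proof (Kb p w Hw) as H2. pose proof (Rb m _ Hsw) as H3.
    pose proof (Bb m _ Hsw) as H4. fold f.
    assert (H5 : B * (1 - a ^ p) / (1 - a) <= B / (1 - a)).
    { unfold Rdiv. apply Rmult_le_compat_r. left; apply Rinv_0_lt_compat; lra.
      pose proof (pow_le a p ltac:(lra)). nra. }
    set (e1 := ln (r (pref w (p + m))) - ln (r (pref (shiftk p w) m)) + birkhoff f p w +
          ln (kapw kp (pref w p) (pref (shiftk p w) m))) in *.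
    set (e2 := ln (kapw kp (pref w p) (pref (shiftk p w) m))) in *.
    set (e3 := ln (r (pref (shiftk p w) m)) - ln (r [])) in *.
    set (e4 := birkhoff f m (shiftk p w)) in *.
    replace (ln (r (pref w (p + m))) - ln (r []) + (birkhoff f p w + e4)) with (e1 - e2 + e3 + e4) by (unfold e1, e2, e3; ring).
    pose proof (Rabs_triang (e1 - e2 + e3) e4). pose proof (Rabs_triang (e1 - e2) e3).
    assert (Rabs (e1 - e2) <= Rabs e1 + Rabs e2) by (unfold Rminus; eapply Rle_trans; [apply Rabs_triang| rewrite Rabs_Ropp; lra]). assert (INR m * (Lr + (B + M0)) = INR m * Lr + INR m * (B + M0)) by ring. lra.
  - pose proof (Rb n w Hw). pose proof (Bb n w Hw). fold f.
    assert (INR n <= INR m) by (apply le_INR; lia). pose proof (pos_INR n).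
    pose proof (Rabs_triang (ln (r (pref w n)) - ln (r [])) (birkhoff f n w)). nra.
Qed.

Definition Fh (T : seqw -> Prop) (g : seqw -> R) (I : list nat) : R :=
  match excluded_middle_informative (Tstar T I) with
  | left _ => exp (Rsup (fun v => exists w, cyl T I w /\ v = birkhoff g (length I) w))
  | right _ => 0
  end.

Definition Zs N T g n := lsum (map (Fh T g) (words N n)).

Lemma pressure_seq_Zs N T g n : pressure_seq N T g n = / INR n * ln (Zs N T g n).
Proof.
  unfold pressure_seq, Zs. f_equal. f_equal. f_equal. apply map_ext_in. intros I HI.
  apply In_words_length in HI. unfold Fh. rewrite HI. reflexivity.
Qed.

Lemma app_same_len {A0} (l1 l2 m1 m2 : list A0) : l1 ++ l2 = m1 ++ m2 -> length l1 = length m1 -> l1 = m1 /\ l2 = m2.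
Proof.
  revert m1. induction l1; intros [|b m1] H Hl; simpl in *; try discriminate; auto.
  inversion H; subst. destruct (IHl1 m1 H2 ltac:(lia)). subst; auto.
Qed.

Lemma Tstar_app_inv N T A I1 I2 : M1 N T A -> Tstar T (I1 ++ I2) ->
  Tstar T I1 /\ Tstar T I2.
Proof.
  intros HM (w & Hw & Hp). rewrite length_app, pref_app in Hp.
  apply app_same_len in Hp; [|apply pref_length]. destruct Hp as [H1 H2]. split.
  - exists w; split; auto.
  - exists (shiftk (length I1) w); split; auto. eapply T_shiftk; eauto.
Qed.

Lemma Rsup_lub (S : R -> Prop) : (exists v, S v) -> (exists U, forall v, S v -> v <= U) -> is_lub S (Rsup S).
Proof.
  intros Hne Hb. unfold Rsup. destruct (excluded_middle_informative (exists l, is_lub S l)) as [H|H].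
  - destruct (constructive_indefinite_description _ H). simpl. auto.
  - exfalso. apply H. destruct (completeness S) as [m Hm]; eauto.
Qed.

Lemma Rsup_bounds (S : R -> Prop) lo hi : (exists v, S v) -> (forall v, S v -> lo <= v <= hi) ->
  lo <= Rsup S <= hi.
Proof.
  intros Hne Hb. assert (Hl : is_lub S (Rsup S)).
  { apply Rsup_lub; auto. exists hi. intros; apply Hb; auto. }
  destruct Hl as [Hu Hle]. destruct Hne as [v Hv]. split.
  - specialize (Hu v Hv). specialize (Hb v Hv). lra.
  - apply Hle. intros x Hx. apply Hb; auto.
Qed.

Lemma Rabs_bnd x b : Rabs x <= b -> - b <= x <= b.
Proof. intro H. pose proof (Rle_abs x). pose proof (Rle_abs (-x)). rewrite Rabs_Ropp in *. lra. Qed.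

Lemma V_bounds T r rhow K t (HK : forall n w, T w -> Rabs (ln (r (pref w n)) - ln (r []) + birkhoff (fun v => ln (/ rhow v)) n w) <= K)
  I : Tstar T I ->
  (exists v, exists w, cyl T I w /\ v = birkhoff (fun w => - t * ln (/ rhow w)) (length I) w) /\
  (forall v, (exists w, cyl T I w /\ v = birkhoff (fun w => - t * ln (/ rhow w)) (length I) w) ->
     t * (ln (r I) - ln (r [])) - Rabs t * K <= v <= t * (ln (r I) - ln (r [])) + Rabs t * K).
Proof.
  intros HI. split.
  - destruct HI as (w & Hw & Hp). exists (birkhoff (fun w => - t * ln (/ rhow w)) (length I) w), w. split; auto. split; auto.
  - intros v (w & [Hw Hp] & ->). rewrite birkhoff_scal.
    specialize (HK (length I) w Hw). rewrite Hp in HK.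
    set (bf := birkhoff (fun v => ln (/ rhow v)) (length I) w) in *.
    set (c := ln (r I) - ln (r [])) in *.
    assert (Rabs (t * (c + bf)) <= Rabs t * K) by (rewrite Rabs_mult; apply Rmult_le_compat_l; auto; apply Rabs_pos).
    apply Rabs_bnd in H. replace (- t * bf) with (t * c - t * (c + bf)) by ring. lra.
Qed.

Lemma exp_le x y : x <= y -> exp x <= exp y.
Proof. intros [H|H]. left; apply exp_increasing; auto. subst; lra. Qed.

Lemma Fh_nonneg T g I : 0 <= Fh T g I.
Proof. unfold Fh. destruct (excluded_middle_informative _). left; apply exp_pos. lra. Qed.

Lemma Fh_bounds T r rhow K t (HK : forall n w, T w -> Rabs (ln (r (pref w n)) - ln (r []) + birkhoff (fun v => ln (/ rhow v)) n w) <= K)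
  I : Tstar T I ->
  exp (t * (ln (r I) - ln (r [])) - Rabs t * K) <= Fh T (fun w => - t * ln (/ rhow w)) I <=
  exp (t * (ln (r I) - ln (r [])) + Rabs t * K).
Proof.
  intro HI. unfold Fh. destruct (excluded_middle_informative _) as [_|Hn]; [|contradiction].
  destruct (V_bounds T r rhow K t HK I HI) as [Hne Hb].
  pose proof (Rsup_bounds _ _ _ Hne Hb). split; apply exp_le; lra.
Qed.

Lemma Fh_submult N T A r rhow K t (HM1 : M1 N T A)
  (HK : forall n w, T w -> Rabs (ln (r (pref w n)) - ln (r []) + birkhoff (fun v => ln (/ rhow v)) n w) <= K)
  I1 I2 : Fh T (fun w => - t * ln (/ rhow w)) (I1 ++ I2) <=
          Fh T (fun w => - t * ln (/ rhow w)) I1 * Fh T (fun w => - t * ln (/ rhow w)) I2.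
Proof.
  destruct (excluded_middle_informative (Tstar T (I1 ++ I2))) as [H12|Hn].
  2:{ unfold Fh at 1. destruct (excluded_middle_informative _); [contradiction|].
      apply Rmult_le_pos; apply Fh_nonneg. }
  destruct (Tstar_app_inv _ _ _ _ _ HM1 H12) as [H1 H2].
  unfold Fh. destruct (excluded_middle_informative (Tstar T (I1 ++ I2))) as [_|]; [|contradiction].
  destruct (excluded_middle_informative (Tstar T I1)) as [_|]; [|contradiction].
  destruct (excluded_middle_informative (Tstar T I2)) as [_|]; [|contradiction].
  rewrite <- exp_plus. apply exp_le.
  destruct (V_bounds T r rhow K t HK _ H12) as [Hne12 Hb12].
  destruct (V_bounds T r rhow K t HK _ H1) as [Hne1 Hb1].
  destruct (V_bounds T r rhow K t HK _ H2) as [Hne2 Hb2].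
  assert (L12 := Rsup_lub _ Hne12 ltac:(eexists; intros v h; apply (Hb12 v h))).
  assert (L1 := Rsup_lub _ Hne1 ltac:(eexists; intros v h; apply (Hb1 v h))).
  assert (L2 := Rsup_lub _ Hne2 ltac:(eexists; intros v h; apply (Hb2 v h))).
  destruct L12 as [_ Hle]. apply Hle. intros v (w & [Hw Hp] & ->).
  rewrite length_app in *. rewrite birkhoff_add.
  rewrite pref_app in Hp. apply app_same_len in Hp; [|apply pref_length]. destruct Hp as [Hp1 Hp2].
  apply Rplus_le_compat.
  - apply (proj1 L1). exists w. split; auto. split; auto.
  - apply (proj1 L2). exists (shiftk (length I1) w). split; auto. split; auto. eapply T_shiftk; eauto.
Qed.

Lemma Zs_submult N T A r rhow K t (HM1 : M1 N T A)
  (HK : forall n w, T w -> Rabs (ln (r (pref w n)) - ln (r []) + birkhoff (fun v => ln (/ rhow v)) n w) <= K)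
  n m : Zs N T (fun w => - t * ln (/ rhow w)) (n + m) <=
        Zs N T (fun w => - t * ln (/ rhow w)) n * Zs N T (fun w => - t * ln (/ rhow w)) m.
Proof.
  unfold Zs. rewrite words_split. set (F := Fh T (fun w => - t * ln (/ rhow w))).
  rewrite <- lsum_scal_r. apply lsum_le. intros I1 _.
  rewrite <- lsum_scal_l. apply lsum_le. intros I2 _. apply (Fh_submult N T A r rhow K t HM1 HK).
Qed.

Lemma fekete (a : nat -> R) : (forall n m, a (n + m)%nat <= a n + a m) ->
  (exists c, forall n, (1 <= n)%nat -> c <= / INR n * a n) ->
  exists L, Un_cv (fun n => / INR n * a n) L /\ (forall n, (1 <= n)%nat -> L <= / INR n * a n).
Proof.
  intros Hsub [c Hc].
  set (E := fun y => exists n, (1 <= n)%nat /\ y = - (/ INR n * a n)).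
  destruct (completeness E) as [l [Hub Hleast]].
  { exists (- c). intros y (n & Hn & ->). specialize (Hc n Hn). lra. }
  { exists (- (/ INR 1 * a 1%nat)). exists 1%nat. split; auto. }
  assert (HL : forall n, (1 <= n)%nat -> - l <= / INR n * a n).
  { intros n Hn. assert (- (/ INR n * a n) <= l) by (apply Hub; exists n; auto). lra. }
  exists (- l). split; auto.
  intros eps Heps.
  assert (Hk : exists k, (1 <= k)%nat /\ / INR k * a k < - l + eps / 2).
  { apply NNPP. intro Hn. assert (l <= l - eps / 2); [|lra].
    apply Hleast. intros y (n & Hn1 & ->).
    assert (~ (/ INR n * a n < - l + eps / 2)) by (intro; apply Hn; exists n; auto). lra. }
  destruct Hk as (k & Hk1 & Hk2).
  set (x := / INR k * a k) in *.
  assert (HINRk : 0 < INR k) by (apply lt_0_INR; lia).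
  assert (Hak : a k = INR k * x) by (unfold x; field; lra).
  assert (Hq : forall q, (1 <= q)%nat -> a (q * k)%nat <= INR q * a k).
  { induction q as [|q IH]; intros Hq; [lia|]. destruct q.
    - simpl. rewrite Nat.add_0_r. lra.
    - replace (S (S q) * k)%nat with (S q * k + k)%nat by lia. rewrite S_INR.
      pose proof (Hsub (S q * k)%nat k). specialize (IH ltac:(lia)). lra. }
  assert (Hr : forall q r, (1 <= q)%nat -> a (q * k + r)%nat <= INR q * a k + INR r * a 1%nat).
  { intros q r Hq1. induction r.
    - rewrite Nat.add_0_r. simpl. pose proof (Hq q Hq1). lra.
    - replace (q * k + S r)%nat with (q * k + r + 1)%nat by lia. rewrite S_INR.
      pose proof (Hsub (q * k + r)%nat 1%nat). lra. }
  set (M := Rabs (a 1%nat) + Rabs x).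
  assert (HM : 0 <= M) by (unfold M; pose proof (Rabs_pos (a 1%nat)); pose proof (Rabs_pos x); lra).
  destruct (INR_archimed (eps / 2) (INR k * M) ltac:(lra)) as [N0 HN0].
  exists (max k N0). intros n Hn. unfold R_dist.
  assert (Hnk : (k <= n)%nat) by lia. assert (HnN : (N0 <= n)%nat) by lia.
  assert (HINRn : 0 < INR n) by (apply lt_0_INR; lia).
  pose proof (HL n ltac:(lia)).
  set (q := (n / k)%nat). set (r := (n mod k)%nat).
  assert (Hdec : n = (q * k + r)%nat) by (unfold q, r; rewrite Nat.mul_comm; apply Nat.div_mod; lia).
  assert (Hrk : (r < k)%nat) by (unfold r; apply Nat.mod_upper_bound; lia).
  assert (Hq1 : (1 <= q)%nat) by (unfold q; apply Nat.div_le_lower_bound; lia).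
  pose proof (Hr q r Hq1) as Han. rewrite <- Hdec in Han.
  assert (HnR : INR n = INR q * INR k + INR r) by (rewrite Hdec, plus_INR, mult_INR; reflexivity).
  assert (HrR : INR r <= INR k) by (apply le_INR; lia).
  assert (H0r : 0 <= INR r) by apply pos_INR.
  assert (HNn : INR N0 <= INR n) by (apply le_INR; auto).
  assert (Han2 : a n <= INR n * x + INR k * M).
  { rewrite Hak in Han. assert (INR r * (a 1%nat - x) <= INR r * M).
    { apply Rmult_le_compat_l; auto. unfold M. pose proof (Rle_abs (a 1%nat)). pose proof (Rle_abs (-x)).
      rewrite Rabs_Ropp in *. lra. }
    assert (INR r * M <= INR k * M) by (apply Rmult_le_compat_r; auto). nra. }
  assert (Hdiv : / INR n * a n <= x + INR k * M / INR n).
  { apply Rmult_le_reg_l with (INR n); auto. rewrite <- Rmult_assoc, Rinv_r by lra.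
    replace (INR n * (x + INR k * M / INR n)) with (INR n * x + INR k * M) by (field; lra). lra. }
  assert (Hsmall : INR k * M / INR n < eps / 2).
  { apply Rmult_lt_reg_l with (INR n); auto. replace (INR n * (INR k * M / INR n)) with (INR k * M) by (field; lra).
    assert (INR N0 * (eps / 2) <= INR n * (eps / 2)) by (apply Rmult_le_compat_r; lra). lra. }
  apply Rabs_def1; lra.
Qed.

Definition Gs (T : seqw -> Prop) (r : list nat -> R) (s : R) (I : list nat) : R :=
  if excluded_middle_informative (Tstar T I) then Rpower (r I) s else 0.

Lemma lsum_filter {A0} (P : A0 -> Prop) (g : A0 -> R) l :
  lsum (map g (filter (fun x => if excluded_middle_informative (P x) then true else false) l)) =
  lsum (map (fun x => if excluded_middle_informative (P x) then g x else 0) l).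
Proof.
  induction l; simpl; auto. destruct (excluded_middle_informative (P a)); simpl; rewrite IHl; lra.
Qed.

Lemma Tstar_words N T A I : M1 N T A -> Tstar T I -> In I (words N (length I)).
Proof.
  intros HM (w & Hw & Hp). apply In_words; auto. intros j Hj. rewrite <- Hp in Hj.
  unfold pref in Hj. apply in_map_iff in Hj. destruct Hj as (k & <- & _). eapply T_first_lt; eauto.
Qed.

Lemma sum_bounds N T A r s E (HN : (2 <= N)%nat) (HM1 : M1 N T A) (HT3 : T3' T r s E) n :
  / E * Rpower (r []) s <= lsum (map (Gs T r s) (words N n)) <= E * Rpower (r []) s.
Proof.
  set (Ic := fun J => Tstar T J /\ length J = n).
  assert (H0 : Tstar T []).
  { destruct (T_nonempty N T A HN HM1) as [w Hw]. exists w. split; auto. }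
  destruct (HT3 [] H0 n Ic) as [Hge Hle].
  - intros J [HJ HJl]. split; auto. lia.
  - intros w Hw. exists n. split.
    + split. apply Tstar_pref; auto. apply pref_length.
    + intros k [_ Hk]. rewrite pref_length in Hk. auto.
  - destruct (T_nonempty N T A HN HM1) as [w Hw]. exists (pref w n). split. apply Tstar_pref; auto. apply pref_length.
  - set (p := fun x => if excluded_middle_informative (Tstar T x) then true else false).
    set (l := filter p (words N n)).
    assert (Hsum : lsum (map (fun K => Rpower (r K) s) l) = lsum (map (Gs T r s) (words N n))).
    { unfold l, p. rewrite lsum_filter. reflexivity. }
    assert (Hnd : NoDup l) by (apply NoDup_filter, NoDup_words).
    assert (Hinl : forall K, In K l <-> Tstar T K /\ length K = n).
    { intro K. unfold l. rewrite filter_In. unfold p. split.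
      - intros [H1 H2]. destruct (excluded_middle_informative (Tstar T K)); [|discriminate].
        split; auto. eapply In_words_length; eauto.
      - intros [H1 H2]. split. rewrite <- H2. eapply Tstar_words; eauto.
        destruct (excluded_middle_informative (Tstar T K)); auto. }
    split.
    + apply Rnot_lt_le. intro Hlt.
      set (eps := / E * Rpower (r []) s - lsum (map (Gs T r s) (words N n))).
      destruct (Hge eps ltac:(unfold eps; lra)) as (l' & Hnd' & Hin' & Hgt).
      assert (lsum (map (fun K => Rpower (r K) s) l') <= lsum (map (fun K => Rpower (r K) s) l)).
      { apply lsum_sub; auto.
        - intros K HK. apply Hinl. destruct (Hin' K HK) as (J & -> & HJ). exact HJ.
        - intros; left; unfold Rpower; apply exp_pos. }
      unfold eps in Hgt. lra.
    + rewrite <- Hsum. apply Hle; auto. intros K HK. exists K. split; auto. apply Hinl; auto.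
Qed.

Lemma lim_bound_upper (x : nat -> R) L C dl : (forall n, (1 <= n)%nat -> L <= x n) ->
  (forall n, (1 <= n)%nat -> x n <= C / INR n + dl) -> L <= dl.
Proof.
  intros H1 H2. apply Rnot_lt_le. intro Hlt.
  destruct (INR_archimed (L - dl) (Rabs C) ltac:(lra)) as [n0 Hn0].
  set (n := max 1 n0). assert (Hn : (1 <= n)%nat) by lia.
  assert (HnR : 0 < INR n) by (apply lt_0_INR; lia).
  assert (INR n0 <= INR n) by (apply le_INR; lia).
  assert (INR n0 * (L - dl) <= INR n * (L - dl)) by (apply Rmult_le_compat_r; lra).
  pose proof (Rle_abs C).
  assert (C / INR n < L - dl).
  { apply Rmult_lt_reg_l with (INR n); auto. replace (INR n * (C / INR n)) with C by (field; lra). lra. }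
  specialize (H1 n Hn). specialize (H2 n Hn). lra.
Qed.

Lemma lim_bound_lower (x : nat -> R) L C dl : Un_cv x L ->
  (forall n, (1 <= n)%nat -> C / INR n + dl <= x n) -> dl <= L.
Proof.
  intros H1 H2. apply Rnot_lt_le. intro Hlt.
  destruct (H1 ((dl - L) / 2) ltac:(lra)) as [N0 HN0].
  destruct (INR_archimed ((dl - L) / 2) (Rabs C) ltac:(lra)) as [n1 Hn1].
  set (n := max 1 (max N0 n1)). assert (Hn : (1 <= n)%nat) by lia.
  assert (HnR : 0 < INR n) by (apply lt_0_INR; lia).
  assert (INR n1 <= INR n) by (apply le_INR; lia).
  assert (INR n1 * ((dl - L) / 2) <= INR n * ((dl - L) / 2)) by (apply Rmult_le_compat_r; lra).
  pose proof (Rle_abs (- C)). rewrite Rabs_Ropp in *.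
  assert (- C / INR n < (dl - L) / 2).
  { apply Rmult_lt_reg_l with (INR n); auto. replace (INR n * (- C / INR n)) with (- C) by (field; lra). lra. }
  specialize (HN0 n ltac:(lia)). unfold R_dist in HN0. apply Rabs_def2 in HN0.
  specialize (H2 n Hn). assert (- C / INR n = - (C / INR n)) by (field; lra). lra.
Qed.

Lemma div_bound a C dl n : (1 <= n)%nat -> a <= C + INR n * dl -> / INR n * a <= C / INR n + dl.
Proof.
  intros Hn H. assert (HnR : 0 < INR n) by (apply lt_0_INR; lia).
  apply Rmult_le_reg_l with (INR n); auto. rewrite <- Rmult_assoc, Rinv_r by lra.
  replace (INR n * (C / INR n + dl)) with (C + INR n * dl) by (field; lra). lra.
Qed.

Lemma div_bound2 a C dl n : (1 <= n)%nat -> C + INR n * dl <= a -> C / INR n + dl <= / INR n * a.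
Proof.
  intros Hn H. assert (HnR : 0 < INR n) by (apply lt_0_INR; lia).
  apply Rmult_le_reg_l with (INR n); auto. rewrite <- Rmult_assoc, Rinv_r by lra.
  replace (INR n * (C / INR n + dl)) with (C + INR n * dl) by (field; lra). lra.
Qed.

Lemma Gs_compare_le N T r t s c n : (forall I, Tstar T I -> length I = n -> (t - s) * ln (r I) <= c) ->
  lsum (map (Gs T r t) (words N n)) <= exp c * lsum (map (Gs T r s) (words N n)).
Proof.
  intros H. rewrite <- lsum_scal_l. apply lsum_le. intros I HI. apply In_words_length in HI.
  unfold Gs. destruct (excluded_middle_informative _) as [h|h]; [|rewrite Rmult_0_r; lra].
  unfold Rpower. replace (t * ln (r I)) with ((t - s) * ln (r I) + s * ln (r I)) by ring.
  rewrite exp_plus. apply Rmult_le_compat_r. left; apply exp_pos. apply exp_le; auto.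
Qed.

Lemma Gs_compare_ge N T r t s c n : (forall I, Tstar T I -> length I = n -> c <= (t - s) * ln (r I)) ->
  exp c * lsum (map (Gs T r s) (words N n)) <= lsum (map (Gs T r t) (words N n)).
Proof.
  intros H. rewrite <- lsum_scal_l. apply lsum_le. intros I HI. apply In_words_length in HI.
  unfold Gs. destruct (excluded_middle_informative _) as [h|h]; [|rewrite Rmult_0_r; lra].
  unfold Rpower. replace (t * ln (r I)) with ((t - s) * ln (r I) + s * ln (r I)) by ring.
  rewrite exp_plus. apply Rmult_le_compat_r. left; apply exp_pos. apply exp_le; auto.
Qed.

Lemma Zs_vs_Gs N T r rhow K t (HK : forall n w, T w -> Rabs (ln (r (pref w n)) - ln (r []) + birkhoff (fun v => ln (/ rhow v)) n w) <= K) n :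
  exp (- Rabs t * K - t * ln (r [])) * lsum (map (Gs T r t) (words N n)) <= Zs N T (fun w => - t * ln (/ rhow w)) n <=
  exp (Rabs t * K - t * ln (r [])) * lsum (map (Gs T r t) (words N n)).
Proof.
  unfold Zs. rewrite <- !lsum_scal_l. split; apply lsum_le; intros I _; unfold Gs;
  destruct (excluded_middle_informative (Tstar T I)) as [h|h].
  - pose proof (proj1 (Fh_bounds T r rhow K t HK I h)). unfold Rpower. rewrite <- exp_plus.
    eapply Rle_trans; [|exact H]. apply exp_le. lra.
  - rewrite Rmult_0_r. apply Fh_nonneg.
  - pose proof (proj2 (Fh_bounds T r rhow K t HK I h)). unfold Rpower. rewrite <- exp_plus.
    eapply Rle_trans; [exact H|]. apply exp_le. lra.
  - rewrite Rmult_0_r. unfold Fh. destruct (excluded_middle_informative _); [contradiction|lra].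
Qed.

Lemma neg_abs_div C n : (1 <= n)%nat -> - Rabs C <= C / INR n.
Proof.
  intros Hn. assert (HnR : 1 <= INR n) by (replace 1 with (INR 1) by reflexivity; apply le_INR; auto).
  pose proof (Rle_abs (- C)). rewrite Rabs_Ropp in H. pose proof (Rabs_pos C).
  apply Rmult_le_reg_l with (INR n); [lra|]. replace (INR n * (C / INR n)) with C by (field; lra). nra.
Qed.

Theorem mainTheorem9
  (X : Type) (d : X -> X -> R)
  (Hmetric : is_metric d) (Hcomplete : complete_space d) (Hdoubling : doubling d)
  (N : nat) (HN : (2 <= N)%nat)
  (T : seqw -> Prop) (x : list nat -> X) (r : list nat -> R)
  (Hrpos : forall I, Tstar T I -> 0 < r I)
  (s rho C D E G : R)
  (Hrho : 0 < rho) (HC : 0 < C) (HD : 0 < D) (HE : 0 < E) (HG : 0 <= G)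
  (HT1 : T1 d T x r C) (HT2 : T2 d T x r D) (HT3 : T3' T r s E)
  (HT4 : T4 T r) (HT5 : T5 T r rho)
  (A : nat -> nat -> nat) (HM1 : M1 N T A)
  (HM2 : M2 d T x) (HM3 : M3 T r)
  (phi : nat -> X -> X) (W delta0 : R) (HM4 : M4 d N T x r G phi W delta0)
  (xi : R) (kp km : nat -> list nat -> R) (HM5 : M5 d T x r G phi delta0 xi kp km)
  (rhow : seqw -> R) (f1t f2t : seqw -> R) (HM6 : M6 N T r kp km rhow f1t f2t)
  (HM7 : non_lattice T (fun w => ln (/ rhow w))) :
  forall t : R, exists P : R,
    is_pressure N T (fun w => - t * ln (/ rhow w)) P /\ (P = 0 <-> t = s).
Proof.
  intro t.
  pose proof (kp_pos d N T x r G phi W delta0 xi kp km A Hmetric Hrpos HM1 HM4 HM5) as Hkp.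
  destruct HM3 as (Rc & HRc & Hm3).
  destruct HM6 as (Hrw & Hcont & Hh1 & Hh2 & Hemb & Hf).
  destruct Hh1 as (a & B & Ha & Hh).
  destruct (T_nonempty N T A HN HM1) as [w0 Hw0].
  assert (HB : 0 <= B).
  { specialize (Hh 0%nat w0 w0 (or_introl Hw0) (or_introl Hw0) ltac:(intros k Hk; lia)).
    rewrite Rminus_diag, Rabs_R0 in Hh. simpl in Hh. lra. }
  assert (Hhold : forall w k, T w -> Rabs (ln (/ rhow w) - fM6 r kp (pref w k)) <= B * a ^ k).
  { intros w k Hw. assert (Hts := Tstar_pref T w k Hw).
    rewrite <- (proj1 (Hf w Hw)), <- (proj1 (Hemb _ Hts)). apply Hh.
    - left; auto.
    - right. exists (pref w k). split; auto.
    - intros j Hj. unfold emb. rewrite nth_pref; auto. }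
  destruct HM5 as (_ & _ & Hk5). destruct (Hk5 (/ 2) ltac:(lra)) as [m Hm].
  destruct (distortion N T A r rho Rc kp rhow B a m HM1 Hrpos Hrho (proj1 HRc) HT5 Hm3 Hkp Hhold Ha HB
     ltac:(intros I J h1 h2; apply (Hm I J h1 h2))) as (K & HK0 & HK).
  set (g := fun w => - t * ln (/ rhow w)).
  set (Z := Zs N T g).
  set (r0 := r []).
  set (St := fun u n => lsum (map (Gs T r u) (words N n))).
  assert (Hr0 : 0 < r0) by (apply Hrpos; exists w0; split; auto).
  assert (HLR : forall I, Tstar T I -> INR (length I) * ln rho <= ln (r I) - ln r0 <= INR (length I) * ln Rc).
  { intros I (w & Hw & Hp). pose proof (ln_r_bounds T r rho Rc Hrpos Hrho (proj1 HRc) HT5 Hm3 w (length I) Hw) as h.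
    rewrite Hp in h. exact h. }
  assert (HlnRc : ln Rc < 0) by (rewrite <- ln_1; apply ln_increasing; lra).
  set (Lr := Rabs (ln rho) + Rabs (ln Rc)).
  assert (HStlo : forall n, exp (- Rabs t * (Rabs (ln r0) + INR n * Lr)) <= St t n).
  { intro n. set (I0 := pref w0 n).
    assert (HI0 : Tstar T I0) by (apply Tstar_pref; auto).
    assert (HIn : In I0 (words N n)).
    { pose proof (Tstar_words N T A I0 HM1 HI0). unfold I0 in *. rewrite pref_length in H. auto. }
    eapply Rle_trans; [|apply (In_le_lsum (Gs T r t) _ I0); auto].
    2:{ intros I _. unfold Gs. destruct (excluded_middle_informative _); [left; unfold Rpower; apply exp_pos|lra]. }
    unfold Gs. destruct (excluded_middle_informative _) as [_|]; [|contradiction].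
    unfold Rpower. apply exp_le.
    specialize (HLR I0 HI0). unfold I0 in HLR. rewrite pref_length in HLR. fold I0 in HLR.
    assert (Habs : Rabs (ln (r I0)) <= Rabs (ln r0) + INR n * Lr).
    { pose proof (pos_INR n). unfold Lr.
      pose proof (Rle_abs (ln Rc)). pose proof (Rle_abs (- ln rho)). rewrite Rabs_Ropp in *.
      assert (INR n * ln Rc <= INR n * Rabs (ln Rc)) by (apply Rmult_le_compat_l; lra).
      assert (INR n * (- ln rho) <= INR n * Rabs (ln rho)) by (apply Rmult_le_compat_l; lra).
      pose proof (Rle_abs (ln r0)). pose proof (Rle_abs (- ln r0)). rewrite Rabs_Ropp in *.
      assert (0 <= INR n * Rabs (ln rho)) by (apply Rmult_le_pos; auto; apply Rabs_pos).
      assert (0 <= INR n * Rabs (ln Rc)) by (apply Rmult_le_pos; auto; apply Rabs_pos).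
      assert (INR n * (Rabs (ln rho) + Rabs (ln Rc)) = INR n * Rabs (ln rho) + INR n * Rabs (ln Rc)) by ring.
      apply Rabs_le. split; lra. }
    pose proof (Rle_abs (t * ln (r I0))). pose proof (Rle_abs (- (t * ln (r I0)))). rewrite Rabs_Ropp, Rabs_mult in *.
    assert (Rabs t * Rabs (ln (r I0)) <= Rabs t * (Rabs (ln r0) + INR n * Lr)) by (apply Rmult_le_compat_l; auto; apply Rabs_pos).
    lra. }
  assert (HStpos : forall u n, 0 < St u n -> True) by auto.
  assert (HSt0 : forall n, 0 < St t n) by (intro n; eapply Rlt_le_trans; [apply exp_pos|apply HStlo]).
  assert (HZb : forall n, - Rabs t * K - t * ln r0 + ln (St t n) <= ln (Z n) <= Rabs t * K - t * ln r0 + ln (St t n)).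
  { intro n. destruct (Zs_vs_Gs N T r rhow K t HK n) as [h1 h2]. fold g r0 in h1, h2.
    fold Z in h1, h2. change (lsum (map (Gs T r t) (words N n))) with (St t n) in h1, h2. pose proof (HSt0 n).
    assert (0 < exp (- Rabs t * K - t * ln r0) * St t n) by (apply Rmult_lt_0_compat; auto; apply exp_pos).
    pose proof (exp_pos (- Rabs t * K - t * ln r0)). pose proof (exp_pos (Rabs t * K - t * ln r0)).
    split.
    - rewrite <- (ln_exp (- Rabs t * K - t * ln r0)), <- ln_mult by auto. apply ln_le; auto.
    - rewrite <- (ln_exp (Rabs t * K - t * ln r0)), <- ln_mult by auto. apply ln_le; auto. lra. }
  assert (HZpos : forall n, 0 < Z n).
  { intro n. destruct (Zs_vs_Gs N T r rhow K t HK n) as [h1 _]. fold g r0 Z in h1. change (lsum (map (Gs T r t) (words N n))) with (St t n) in h1.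
    eapply Rlt_le_trans; [|exact h1]. apply Rmult_lt_0_compat; auto. apply exp_pos. }
  assert (Hsub : forall n m0, ln (Z (n + m0)%nat) <= ln (Z n) + ln (Z m0)).
  { intros n m0. rewrite <- ln_mult by auto. apply ln_le; auto. apply (Zs_submult N T A r rhow K t HM1 HK). }
  assert (Hlow : exists c, forall n, (1 <= n)%nat -> c <= / INR n * ln (Z n)).
  { set (C0 := - Rabs t * K - t * ln r0 - Rabs t * Rabs (ln r0)). exists (- Rabs C0 + (- Rabs t * Lr)).
    intros n Hn. assert (h : C0 + INR n * (- Rabs t * Lr) <= ln (Z n)).
    { pose proof (HZb n) as [h1 _]. pose proof (HStlo n) as h2. apply ln_le in h2; [|apply exp_pos].
      rewrite ln_exp in h2. unfold C0. nra. }
    pose proof (div_bound2 _ _ _ n Hn h). pose proof (neg_abs_div C0 n Hn). lra. }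
  destruct (fekete (fun n => ln (Z n)) Hsub Hlow) as (L & HL & Hinf).
  exists L. split.
  { unfold is_pressure. intros eps Heps. destruct (HL eps Heps) as [N0 HN0]. exists N0.
    intros n Hn. rewrite pressure_seq_Zs. apply HN0; auto. }
  assert (Hss : forall n, / E * Rpower r0 s <= St s n <= E * Rpower r0 s) by (intro n; apply (sum_bounds N T A r s E HN HM1 HT3 n)).
  assert (Hsp : 0 < / E * Rpower r0 s) by (apply Rmult_lt_0_compat; [apply Rinv_0_lt_compat; auto| unfold Rpower; apply exp_pos]).
  destruct (Rtotal_order t s) as [Hlt|[Heq|Hgt]].
  - assert (Hl : forall n, (1 <= n)%nat -> (- Rabs t * K - t * ln r0 + (t - s) * ln r0 + ln (/ E * Rpower r0 s)) / INR n + (t - s) * ln Rc <= / INR n * ln (Z n)).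
    { intros n Hn. apply div_bound2; auto.
      set (c := (t - s) * (ln r0 + INR n * ln Rc)).
      assert (Hc : exp c * St s n <= St t n).
      { apply Gs_compare_ge. intros I HI Hl. specialize (HLR I HI). rewrite Hl in HLR. unfold c. nra. }
      pose proof (Hss n) as [hs1 _]. pose proof (exp_pos c).
      assert (hp : 0 < exp c * St s n) by (apply Rmult_lt_0_compat; lra).
      apply ln_le in Hc; auto. rewrite ln_mult, ln_exp in Hc by lra.
      apply ln_le in hs1; auto.
      pose proof (HZb n) as [h1 _]. unfold c in Hc.
      assert ((t - s) * (ln r0 + INR n * ln Rc) = (t - s) * ln r0 + INR n * ((t - s) * ln Rc)) by ring. lra. }
    pose proof (lim_bound_lower _ _ _ _ HL Hl). split; intro; [|lra]. exfalso.
    assert (0 < (t - s) * ln Rc) by nra. lra.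
  - subst t. split; auto. intros _.
    assert (Hl : forall n, (1 <= n)%nat -> (- Rabs s * K - s * ln r0 + ln (/ E * Rpower r0 s)) / INR n + 0 <= / INR n * ln (Z n)).
    { intros n Hn. apply div_bound2; auto. pose proof (Hss n) as [hs1 _]. apply ln_le in hs1; auto.
      pose proof (HZb n) as [h1 _]. rewrite Rmult_0_r. lra. }
    assert (Hu : forall n, (1 <= n)%nat -> / INR n * ln (Z n) <= (Rabs s * K - s * ln r0 + ln (E * Rpower r0 s)) / INR n + 0).
    { intros n Hn. apply div_bound; auto. pose proof (Hss n) as [hs1 hs2]. apply ln_le in hs2; [|lra].
      pose proof (HZb n) as [_ h1]. rewrite Rmult_0_r. lra. }
    pose proof (lim_bound_lower _ _ _ _ HL Hl). pose proof (lim_bound_upper _ _ _ _ Hinf Hu). lra.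
  - assert (Hu : forall n, (1 <= n)%nat -> / INR n * ln (Z n) <= (Rabs t * K - t * ln r0 + (t - s) * ln r0 + ln (E * Rpower r0 s)) / INR n + (t - s) * ln Rc).
    { intros n Hn. apply div_bound; auto.
      set (c := (t - s) * (ln r0 + INR n * ln Rc)).
      assert (Hc : St t n <= exp c * St s n).
      { apply Gs_compare_le. intros I HI Hl. specialize (HLR I HI). rewrite Hl in HLR. unfold c. nra. }
      pose proof (Hss n) as [hs1 hs2]. pose proof (exp_pos c).
      apply ln_le in Hc; auto. rewrite ln_mult, ln_exp in Hc by lra.
      apply ln_le in hs2; [|lra].
      pose proof (HZb n) as [_ h1]. unfold c in Hc.
      assert ((t - s) * (ln r0 + INR n * ln Rc) = (t - s) * ln r0 + INR n * ((t - s) * ln Rc)) by ring. lra. }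
    pose proof (lim_bound_upper _ _ _ _ Hinf Hu). split; intro; [|lra]. exfalso.
    assert ((t - s) * ln Rc < 0) by nra. lra.
Qed.
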